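(* Let $\kappa=[2\ell]$ with $\ell\in\mathbb Z$. Then $g^{(n)}(\kappa)\in\mathbb Z[q,q^{-1}]$ for all $n\ge0$.
   Context: $q$ is an indeterminate, $[n]=\frac{q^n-q^{-n}}{q-q^{-1}}$ for $n\in\mathbb Z$, $[n]!=[1]\cdots[n]$, $[0]!=1$. The polynomials $g_n(x)$ are $g_{2m}(x)=\prod_{i=0}^{m-1}(x^2-[2i]^2)$ and $g_{2m+1}(x)=x\prod_{i=1}^m(x^2-[2i]^2)$, and $g^{(n)}=g_n/[n]!$. *)

(* Defs.v *)
From HB Require Import structures.
From mathcomp Require Import all_boot all_order all_algebra.
From mathcomp Require Import fraction.
Set Implicit Arguments. Unset Strict Implicit. Unset Printing Implicit Defensive.
Import Order.TTheory GRing.Theory Num.Theory.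
Local Open Scope ring_scope.

(* K = Q(q), realised as the field of fractions of Z[q]. *)
Definition K : fieldType := {fraction {poly int}}.

Definition qv : K := tofrac ('X : {poly int}).

Definition qint (n : int) : K := (qv ^ n - qv ^ (- n)) / (qv - qv^-1).

Definition qfact (n : nat) : K := \prod_(1 <= i < n.+1) qint i%:Z.

Definition gpoly (n : nat) (x : K) : K :=
  if odd n then x * \prod_(1 <= i < (n./2).+1) (x ^+ 2 - qint (2 * i)%N%:Z ^+ 2)
  else \prod_(0 <= i < n./2) (x ^+ 2 - qint (2 * i)%N%:Z ^+ 2).

Definition gdiv (n : nat) (x : K) : K := gpoly n x / qfact n.

(* membership in the subring Z[q, q^{-1}] of Q(q) *)
Definition laurent (x : K) : Prop :=
  exists (p : {poly int}) (k : nat), x = tofrac p / qv ^+ k.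

(* Main.v *)
Require Import Defs.
From HB Require Import structures.
From mathcomp Require Import all_boot all_order all_algebra.
From mathcomp Require Import fraction ring zify.
Import Order.TTheory GRing.Theory Num.Theory.
Local Open Scope ring_scope.
Set Implicit Arguments. Unset Strict Implicit. Unset Printing Implicit Defensive.

Lemma qv_neq0 : qv != 0.
Proof. by rewrite /qv tofrac_eq0 polyX_eq0. Qed.

Lemma qvXn_neq1 n : (0 < n)%N -> qv ^+ n != 1.
Proof.
move=> n0; rewrite /qv -tofracXn -tofrac1 tofrac_eq.
apply/negP => /eqP E; have := congr1 (fun p : {poly int} => size p) E; rewrite /=; rewrite size_polyXn size_poly1; clear E.
by case: n n0.
Qed.

Lemma qvXn_neq0 n : qv ^+ n != 0.
Proof. by rewrite expf_neq0 // qv_neq0. Qed.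

Lemma diff_neq0 n : (0 < n)%N -> qv ^+ n - (qv ^+ n)^-1 != 0.
Proof.
move=> n0; apply/negP => /eqP H.
have h := qvXn_neq0 n.
have E : qv ^+ n * (qv ^+ n - (qv ^+ n)^-1) = qv ^+ (n * 2) - 1.
  by rewrite mulrBr divff // exprM expr2.
move: E; rewrite H mulr0 => /esym /eqP; rewrite subr_eq0.
by apply/negP; apply: qvXn_neq1; rewrite muln_gt0 n0.
Qed.

Lemma fD (F : fieldType) (P R A B : F) : A != 0 -> B != 0 ->
  P / A + R / B = (P * B + R * A) / (A * B).
Proof. by move=> ha hb; field; rewrite ha hb. Qed.
Lemma fM (F : fieldType) (P R A B : F) : A != 0 -> B != 0 ->
  P / A * (R / B) = (P * R) / (A * B).
Proof. by move=> ha hb; field; rewrite ha hb. Qed.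

Lemma laurent_tofrac p : laurent (tofrac p).
Proof. by exists p, 0%N; rewrite expr0 divr1. Qed.

Lemma laurent1 : laurent 1.
Proof. by rewrite -tofrac1; apply: laurent_tofrac. Qed.

Lemma laurentD x y : laurent x -> laurent y -> laurent (x + y).
Proof.
move=> [p [a ->]] [r [b ->]].
exists (p * 'X^b + r * 'X^a), (a + b)%N.
rewrite tofracD !tofracM !tofracXn -/qv exprD.
have ha := qvXn_neq0 a; have hb := qvXn_neq0 b.
move: (tofrac p) (tofrac r) => P R.
exact: (@fD K _ _ _ _ ha hb).
Qed.

Lemma laurentM x y : laurent x -> laurent y -> laurent (x * y).
Proof.
move=> [p [a ->]] [r [b ->]].
exists (p * r), (a + b)%N.
rewrite !tofracM exprD.
have ha := qvXn_neq0 a; have hb := qvXn_neq0 b.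
move: (tofrac p) (tofrac r) => P R.
exact: (@fM K _ _ _ _ ha hb).
Qed.

Lemma laurentN x : laurent x -> laurent (- x).
Proof. by move=> [p [a ->]]; exists (- p), a; rewrite tofracN mulNr. Qed.

Lemma laurentB x y : laurent x -> laurent y -> laurent (x - y).
Proof. by move=> hx hy; apply: laurentD => //; apply: laurentN. Qed.

Lemma laurentZ (z : int) : laurent (qv ^ z).
Proof.
case: z => n.
  by exists ('X^n), 0%N; rewrite expr0 divr1 tofracXn.
by exists 1, n.+1; rewrite tofrac1 div1r.
Qed.
Section Gen.
Variables (F : fieldType) (q : F).
Hypothesis q0 : q != 0.
Definition E (j : int) := q ^ (2 * j) - q ^ (- (2 * j)).
Definition C (k : int) := q ^ k - q ^ (- k).
Definition S (k : int) := q ^ k + q ^ (- k).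
Lemma qD (a b : int) : q ^ (a + b) = q ^ a * q ^ b. Proof. exact: expfzDr. Qed.
Lemma qN (a : int) : q ^ (- a) = (q ^ a)^-1. Proof. by rewrite invr_expz. Qed.
Lemma q2 (a : int) : q ^ (2 * a) = q ^ a * q ^ a.
Proof. by rewrite mulr_natl mulr2n qD. Qed.
Lemma qnz (a : int) : q ^ a != 0. Proof. exact: expfz_neq0. Qed.

Lemma E_CS k : E k = C k * S k.
Proof.
rewrite /E /C /S !qN q2; have := qnz k; move: (q ^ k) => u hu.
by field.
Qed.

Lemma E_diffsq a b : E a ^+ 2 - E b ^+ 2 = E (a - b) * E (a + b).
Proof.
rewrite /E !qN !q2 !qD ?qN.
have := qnz a; have := qnz b; move: (q ^ a) (q ^ b) => u v hv hu.
by field; rewrite hu hv.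
Qed.

Lemma E_pascal x y : E (x + y) = q ^ (2 * y) * E x + q ^ (- (2 * x)) * E y.
Proof.
rewrite /E !qN !q2 !qD ?qN.
have := qnz x; have := qnz y; move: (q ^ x) (q ^ y) => u v hv hu.
by field; rewrite hu hv.
Qed.

Lemma E_S a b : E a * S (2 * b) = E (a + b) + E (a - b).
Proof.
rewrite /E /S !qN !q2 !qD ?qN.
have := qnz a; have := qnz b; move: (q ^ a) (q ^ b) => u v hv hu.
by field; rewrite hu hv.
Qed.
End Gen.

Notation e := (E qv).
Notation c := (C qv).
Notation s := (S qv).
Definition d : K := qv - qv^-1.

Lemma C_neq0 (m : nat) : (0 < m)%N -> c m != 0.
Proof. by move=> m0; rewrite /C (qN qv); apply: diff_neq0. Qed.

Lemma e_neq0 (m : nat) : (0 < m)%N -> e m != 0.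
Proof.
move=> m0; rewrite /E; have -> : 2 * m%:Z = (2 * m)%N by rewrite PoszM.
rewrite (qN qv); apply: diff_neq0; lia.
Qed.

Lemma s_neq0 (m : nat) : (0 < m)%N -> s m != 0.
Proof.
move=> m0; have := e_neq0 m0; rewrite (E_CS qv_neq0) mulf_eq0 negb_or.
by case/andP.
Qed.

Lemma d_neq0 : d != 0.
Proof. by have := diff_neq0 (ltn0Sn 0); rewrite expr1. Qed.

Lemma d_C : d = c 1.
Proof. by rewrite /C (qN qv) expr1z. Qed.

Lemma qint_C (k : int) : qint k = c k / d.
Proof. by []. Qed.

Lemma qint_E (j : int) : qint (2 * j) = e j / d.
Proof. by []. Qed.

Lemma qint_En (i : nat) : qint (2 * i)%N%:Z = e i / d.
Proof. by rewrite PoszM. Qed.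

Lemma laurent_e j : laurent (e j).
Proof. by apply: laurentB; apply: laurentZ. Qed.
Lemma laurent_s j : laurent (s j).
Proof. by apply: laurentD; apply: laurentZ. Qed.

Definition P (a : int) (N : nat) : K := \prod_(i < N) e (a + i%:Z).
Definition Fp (N : nat) : K := \prod_(i < N) e (i.+1)%:Z.
Definition SS (N : nat) : K := \prod_(i < N) s (i.+1)%:Z.
Definition T a N := P a N / Fp N.

Lemma Fp_rec N : Fp N.+1 = Fp N * e (N.+1)%:Z.
Proof. by rewrite /Fp big_ord_recr. Qed.
Lemma SS_rec N : SS N.+1 = SS N * s (N.+1)%:Z.
Proof. by rewrite /SS big_ord_recr. Qed.
Lemma P_recr a N : P a N.+1 = P a N * e (a + N%:Z).
Proof. by rewrite /P big_ord_recr. Qed.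
Lemma P_recl a N : P a N.+1 = e a * P (a + 1) N.
Proof.
rewrite /P big_ord_recl addr0; congr (_ * _); apply: eq_bigr => i _.
congr e; rewrite /= (_ : bump 0 i = i.+1) //; lia.
Qed.

Lemma Fp_neq0 N : Fp N != 0.
Proof.
elim: N => [|N IH]; first by rewrite /Fp big_ord0; exact: oner_neq0.
rewrite Fp_rec; apply: mulf_neq0; [exact: IH | exact: e_neq0].
Qed.

Lemma P1 N : P 1 N = Fp N.
Proof. by apply: eq_bigr => i _; congr e; lia. Qed.

Lemma T1 N : T 1 N = 1.
Proof. rewrite /T P1; apply: divff; exact: Fp_neq0. Qed.

Lemma fT (F : fieldType) (Pa A ea1 B eN FN : F) : FN != 0 -> eN != 0 ->
  Pa * (A * ea1 + B * eN) / (FN * eN) = A * (ea1 * Pa / (FN * eN)) + B * (Pa / FN).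
Proof. by move=> h1 h2; field; rewrite h1 h2. Qed.

Lemma T_rec a N : T a N.+1 =
  qv ^ (2 * (N.+1)%:Z) * T (a - 1) N.+1 + qv ^ (- (2 * (a - 1))) * T a N.
Proof.
rewrite /T P_recr (P_recl (a - 1)) Fp_rec.
have -> : a - 1 + 1 = a by lia.
have -> : a + N%:Z = (a - 1) + (N.+1)%:Z by lia.
rewrite (E_pascal qv_neq0).
apply: fT; [exact: Fp_neq0 | exact: e_neq0].
Qed.

Lemma fInv (F : fieldType) (x A y z : F) : A != 0 -> x = A * y + z -> y = A^-1 * (x - z).
Proof. by move=> hA ->; field; rewrite hA. Qed.

Lemma T_laurent N : forall a, laurent (T a N).
Proof.
elim: N => [|N IH] a.
  by rewrite /T /P /Fp !big_ord0 divr1; apply: laurent1.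
have up b : laurent (T (b - 1) N.+1) -> laurent (T b N.+1).
  move=> H; rewrite T_rec; apply: laurentD; apply: laurentM => //; exact: laurentZ.
have down b : laurent (T b N.+1) -> laurent (T (b - 1) N.+1).
  move=> H; rewrite (fInv (expfz_neq0 _ qv_neq0) (T_rec b N)) invr_expz.
  apply: laurentM; first exact: laurentZ.
  apply: laurentB => //; apply: laurentM => //; exact: laurentZ.
have key n : laurent (T (1 + n%:Z) N.+1) /\ laurent (T (1 - n%:Z) N.+1).
  elim: n => [|n [IH1 IH2]].
    have E1 : 1 + 0%:Z = 1 by lia.
    have E2 : 1 - 0%:Z = 1 by lia.
    rewrite E1 T1; split; exact: laurent1.
  split.
    apply: up; have -> : 1 + (n.+1)%:Z - 1 = 1 + n%:Z by lia.
    exact: IH1.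
  have -> : 1 - (n.+1)%:Z = 1 - n%:Z - 1 by lia.
  by apply: down.
have [n [->|->]] : exists n : nat, a = 1 + n%:Z \/ a = 1 - n%:Z.
  exists `|a - 1|%N; lia.
  by case: (key n).
by case: (key n).
Qed.

Lemma gpoly_odd m x : gpoly (m.*2.+1) x =
  x * \prod_(1 <= i < m.+1) (x ^+ 2 - qint (2 * i)%N%:Z ^+ 2).
Proof. by rewrite /gpoly /= odd_double /= uphalf_double. Qed.

Lemma gpoly_even m x : gpoly (m.*2) x =
  \prod_(0 <= i < m) (x ^+ 2 - qint (2 * i)%N%:Z ^+ 2).
Proof. by rewrite /gpoly odd_double half_double. Qed.

Lemma qfact_rec n : qfact n.+1 = qfact n * qint (n.+1)%:Z.
Proof. by rewrite /qfact big_nat_recr. Qed.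

Lemma qint_neq0 (n : nat) : (0 < n)%N -> qint n%:Z != 0.
Proof.
move=> n0; rewrite qint_C; apply: mulf_neq0; first exact: C_neq0.
by apply: invr_neq0; exact: d_neq0.
Qed.

Lemma qfact_neq0 n : qfact n != 0.
Proof.
elim: n => [|n IH]; first by rewrite /qfact big_geq //; exact: oner_neq0.
rewrite qfact_rec; apply: mulf_neq0; first exact: IH.
exact: qint_neq0.
Qed.

Lemma gpoly_odd_rec m x : gpoly (m.+1.*2.+1) x =
  gpoly (m.*2.+1) x * (x ^+ 2 - qint (2 * m.+1)%N%:Z ^+ 2).
Proof. by rewrite !gpoly_odd big_nat_recr //= mulrA. Qed.

Lemma gpoly_even_odd m x : gpoly (m.+1.*2) x = x * gpoly (m.*2.+1) x.
Proof.
rewrite gpoly_even gpoly_odd big_ltn // muln0.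
have -> : qint 0%N%:Z = 0 by rewrite /qint subrr mul0r.
by rewrite expr0n /= subr0 mulrA -expr2.
Qed.

Lemma sq_diff (F : fieldType) (u v w : F) : w != 0 ->
  (u / w) ^+ 2 - (v / w) ^+ 2 = (u ^+ 2 - v ^+ 2) / w ^+ 2.
Proof. by move=> h; field; rewrite h. Qed.

Lemma SS_laurent N : laurent (SS N).
Proof.
elim: N => [|N IH]; first by rewrite /SS big_ord0; exact: laurent1.
rewrite SS_rec; apply: laurentM; [exact: IH | exact: laurent_s].
Qed.

Lemma fb (F : fieldType) (u w v : F) : w != 0 -> v != 0 ->
  u / w / (w / w) = u / (w * v) * v.
Proof. by move=> h1 h2; field; rewrite h1 h2 ?oner_neq0. Qed.

Lemma fsplit (F : fieldType) (gp Y qf a b : F) : qf != 0 -> a != 0 -> b != 0 ->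
  gp * Y / (qf * a * b) = gp / qf * (Y / (a * b)).
Proof. by move=> h1 h2 h3; field; rewrite h1 h2 h3 ?oner_neq0. Qed.

Lemma fodd (F : fieldType) (P Fp S E1 E2 d c2 c3 s2 s3 : F) :
  Fp != 0 -> d != 0 -> c2 != 0 -> c3 != 0 -> s2 != 0 -> s3 != 0 ->
  P / Fp * S * (E1 * E2 / d ^+ 2 / (c2 / d * (c3 / d))) =
  E1 * (P * E2) / (Fp * (c2 * s2) * (c3 * s3)) * (S * s2 * s3).
Proof.
move=> h1 h2 h3 h4 h5 h6; field.
by rewrite h1 h2 h3 h4 h5 h6 ?oner_neq0.
Qed.

Lemma odd_form l m : gdiv (m.*2.+1) (qint (2 * l)) =
  T (l - m%:Z) (m.*2.+1) * SS (m.*2.+1).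
Proof.
elim: m => [|m IH].
  rewrite /gdiv gpoly_odd big_geq // mulr1 /qfact big_nat1 /T /P /Fp /SS.
  rewrite !big_ord1 /= subr0 addr0.
  rewrite qint_E qint_C (E_CS qv_neq0 1) -d_C.
  apply: fb; [exact: d_neq0 | exact: s_neq0].
rewrite /gdiv gpoly_odd_rec doubleS qfact_rec qfact_rec.
rewrite (fsplit _ _ (qfact_neq0 _) (qint_neq0 (ltn0Sn _)) (qint_neq0 (ltn0Sn _))).
change (gpoly m.*2.+1 (qint (2 * l)) / qfact m.*2.+1) with (gdiv m.*2.+1 (qint (2 * l))).
rewrite IH qint_En qint_E (sq_diff _ _ d_neq0) (E_diffsq qv_neq0) !qint_C.
set A := T (l - m%:Z) m.*2.+1; set B := SS m.*2.+1.
rewrite /T (P_recl (l - (m.+1)%:Z)) (P_recr _ m.*2.+1) (Fp_rec m.*2.+2) (Fp_rec m.*2.+1).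
rewrite (SS_rec m.*2.+2) (SS_rec m.*2.+1).
have -> : l - (m.+1)%:Z + 1 = l - m%:Z by lia.
have -> : l - m%:Z + (m.*2.+1)%:Z = l + (m.+1)%:Z by lia.
rewrite (E_CS qv_neq0 (m.*2.+2)%:Z) (E_CS qv_neq0 (m.*2.+3)%:Z) /A /B /T.
apply: fodd; [exact: Fp_neq0 | exact: d_neq0 | exact: C_neq0 | exact: C_neq0
  | exact: s_neq0 | exact: s_neq0].
Qed.

Lemma fsplit2 (F : fieldType) (x gp qf a : F) : qf != 0 -> a != 0 ->
  x * gp / (qf * a) = gp / qf * (x / a).
Proof. by move=> h1 h2; field; rewrite h1 h2 ?oner_neq0. Qed.

Lemma feven (F : fieldType) (P Fp S el E1 E2 d c2 s2 : F) :
  Fp != 0 -> d != 0 -> c2 != 0 -> s2 != 0 -> el * s2 = E2 + E1 ->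
  P / Fp * S * (el / d / (c2 / d)) =
  (P * E2 / (Fp * (c2 * s2)) + E1 * P / (Fp * (c2 * s2))) * S.
Proof.
move=> h1 h2 h3 h4 H.
have -> : E2 = el * s2 - E1 by rewrite H addrK.
by field; rewrite h1 h2 h3 h4 ?oner_neq0.
Qed.

Lemma even_form l m : gdiv (m.+1.*2) (qint (2 * l)) =
  (T (l - m%:Z) (m.*2.+2) + T (l - (m.+1)%:Z) (m.*2.+2)) * SS (m.*2.+1).
Proof.
rewrite /gdiv gpoly_even_odd doubleS qfact_rec.
rewrite (fsplit2 _ _ (qfact_neq0 _) (qint_neq0 (ltn0Sn _))).
change (gpoly m.*2.+1 (qint (2 * l)) / qfact m.*2.+1) with (gdiv m.*2.+1 (qint (2 * l))).
rewrite odd_form.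
set A := T (l - m%:Z) m.*2.+1; set B := SS m.*2.+1.
rewrite /T (P_recr (l - m%:Z) m.*2.+1) (P_recl (l - (m.+1)%:Z)) (Fp_rec m.*2.+1).
have -> : l - (m.+1)%:Z + 1 = l - m%:Z by lia.
have -> : l - m%:Z + (m.*2.+1)%:Z = l + (m.+1)%:Z by lia.
rewrite qint_E qint_C (E_CS qv_neq0 (m.*2.+2)%:Z).
have -> : (m.*2.+2)%:Z = 2 * (m.+1)%:Z by lia.
rewrite /A /B /T.
apply: feven; [exact: Fp_neq0 | exact: d_neq0 | | | exact: (E_S qv_neq0)].
  have -> : 2 * (m.+1)%:Z = (m.*2.+2)%N%:Z by lia.
  exact: C_neq0.
have -> : 2 * (m.+1)%:Z = (m.*2.+2)%N%:Z by lia.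
exact: s_neq0.
Qed.

Unset Implicit Arguments.
Theorem lemma2p5 (l : int) (n : nat) : laurent (gdiv n (qint (2 * l))).
Proof.
rewrite -[n](odd_double_half n).
case: (odd n) => /=; set m := n./2.
  rewrite add1n odd_form; apply: laurentM; [exact: T_laurent | exact: SS_laurent].
rewrite add0n; case: m => [|m].
  rewrite /gdiv /gpoly /= /qfact !big_geq // divr1; exact: laurent1.
rewrite even_form; apply: laurentM; last exact: SS_laurent.
apply: laurentD; exact: T_laurent.
Qed.
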